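(* A perfect Euler cuboid exists if and only if there exist rational numbers $a,b,u$ with $0<u<1$ and $(a,b)\in D_{ab}$ such that $P(a,b,u)=0$.
   Context: An Euler cuboid is a rectangular parallelepiped whose three edge lengths and three face diagonal lengths are all positive integers; a perfect Euler cuboid is an Euler cuboid whose space diagonal also has integer length, i.e. a $7$-tuple of positive integers $(a,b,c,\alpha,\beta,\gamma,d)$ with $a^2+b^2=\gamma^2$, $b^2+c^2=\alpha^2$, $c^2+a^2=\beta^2$, $a^2+b^2+c^2=d^2$. Let $D_{uz}=\{(u,z)\in\mathbb{R}^2: 0<u<1,\ 0<z<1\}$. Define $f\colon D_{uz}\to\mathbb{R}^2$ by $f(u,z)=(a(u,z),b(u,z))$, where $a(u,z)$ and $b(u,z)$ are the positive real numbers determined by $$a^2=\frac{u^2+z^2}{u^2z^2+1},\qquad b^2=\frac{(1+u^2)(1+z^2)-2z(1-u^2)}{(1+u^2)(1+z^2)+2z(1-u^2)}$$ (both right-hand sides are positive on $D_{uz}$), and let $D_{ab}=f(D_{uz})$. The characteristic polynomial is $$\begin{aligned}P(a,b,u)={}&u^4a^4b^4+6a^4u^2b^4-2u^4a^4b^2-2u^4a^2b^4+4u^2b^4a^2+4a^4u^2b^2-12u^4a^2b^2\\&+u^4a^4+u^4b^4+a^4b^4+6a^4u^2+6u^2b^4-8a^2b^2u^2-2u^4a^2-2u^4b^2-2a^4b^2-2b^4a^2\\&+u^4+b^4+a^4+4a^2u^2+4b^2u^2-12b^2a^2+6u^2-2a^2-2b^2+1.\end{aligned}$$ *)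

(* Defs.v *)
From Stdlib Require Import Reals ZArith QArith Qreals.
Open Scope R_scope.

Definition perfect_euler_cuboid (a b c al be ga d : Z) : Prop :=
  (0 < a)%Z /\ (0 < b)%Z /\ (0 < c)%Z /\ (0 < al)%Z /\ (0 < be)%Z /\
  (0 < ga)%Z /\ (0 < d)%Z /\
  (a^2 + b^2 = ga^2)%Z /\ (b^2 + c^2 = al^2)%Z /\ (c^2 + a^2 = be^2)%Z /\
  (a^2 + b^2 + c^2 = d^2)%Z.

Definition perfect_euler_cuboid_exists : Prop :=
  exists a b c al be ga d : Z, perfect_euler_cuboid a b c al be ga d.

Definition f_a (u z : R) : R :=
  sqrt ((u^2 + z^2) / (u^2 * z^2 + 1)).
Definition f_b (u z : R) : R :=
  sqrt (((1 + u^2) * (1 + z^2) - 2 * z * (1 - u^2)) /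
        ((1 + u^2) * (1 + z^2) + 2 * z * (1 - u^2))).

Definition in_Dab (a b : R) : Prop :=
  exists u z : R, 0 < u < 1 /\ 0 < z < 1 /\ a = f_a u z /\ b = f_b u z.

Definition charP (a b u : R) : R :=
  u^4*a^4*b^4 + 6*a^4*u^2*b^4 - 2*u^4*a^4*b^2 - 2*u^4*a^2*b^4
  + 4*u^2*b^4*a^2 + 4*a^4*u^2*b^2 - 12*u^4*a^2*b^2
  + u^4*a^4 + u^4*b^4 + a^4*b^4 + 6*a^4*u^2 + 6*u^2*b^4
  - 8*a^2*b^2*u^2 - 2*u^4*a^2 - 2*u^4*b^2 - 2*a^4*b^2 - 2*b^4*a^2
  + u^4 + b^4 + a^4 + 4*a^2*u^2 + 4*b^2*u^2 - 12*b^2*a^2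
  + 6*u^2 - 2*a^2 - 2*b^2 + 1.

(* Main.v *)
Require Import Defs.
From Stdlib Require Import Reals ZArith QArith Qreals Lra Lia Psatz.
Open Scope R_scope.
Definition Cf (t : R) := (1 - t^2)/(1 + t^2).
Definition Sf (t : R) := 2*t/(1 + t^2).

Lemma div_eq (a b c e : R) : b <> 0 -> e <> 0 -> a*e = c*b -> a/b = c/e.
Proof. intros Hb He H. apply (Rmult_eq_reg_r (b*e)).
  replace (a/b*(b*e)) with (a*e) by (field; auto).
  replace (c/e*(b*e)) with (c*b) by (field; auto). exact H.
  apply Rmult_integral_contrapositive; auto. Qed.

Lemma half (x y d : R) : y <> 0 -> d <> 0 -> x^2 + y^2 = d^2 ->
  Cf ((d-x)/y) = x/d /\ Sf ((d-x)/y) = y/d.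
Proof. intros Hy Hd H. set (t := (d-x)/y).
  assert (ty : t*y = d-x) by (unfold t; field; auto).
  assert (Ht : 1 + t^2 <> 0) by nra.
  unfold Cf, Sf; split; apply div_eq; auto.
  - assert (E: y^2 * ((1-t^2)*d - x*(1+t^2)) = 0).
    { replace (y^2 * ((1-t^2)*d - x*(1+t^2))) with
        (y^2*d - (t*y)^2*d - x*y^2 - x*(t*y)^2) by ring.
      rewrite ty. replace (y^2) with (d^2-x^2) by lra. ring. }
    apply Rmult_integral in E. destruct E as [E|E]. exfalso; nra. lra.
  - assert (E: y * (2*t*d - y*(1+t^2)) = 0).
    { replace (y * (2*t*d - y*(1+t^2))) with
        (2*(t*y)*d - y^2 - (t*y)^2) by ring.
      rewrite ty. replace (y^2) with (d^2-x^2) by lra. ring. }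
    apply Rmult_integral in E. destruct E as [E|E]. exfalso; nra. lra.
Qed.

Lemma charP_C (a b u : R) : charP a b u =
  ((1+a^2)*(1+b^2)*(1+u^2))^2 * ((Cf a)^2 + (Cf b)^2 - (Cf u)^2).
Proof. unfold charP, Cf. field. repeat split; nra. Qed.

Lemma Ea_C (u z : R) : let E := (u^2+z^2)/(u^2*z^2+1) in
  (1-E)/(1+E) = Cf u * Cf z.
Proof. intros E. unfold E, Cf. field. repeat split; nra. Qed.

Lemma Eb_C (u z : R) : 0 < u < 1 -> 0 < z < 1 ->
  let E := ((1 + u^2) * (1 + z^2) - 2 * z * (1 - u^2)) /
        ((1 + u^2) * (1 + z^2) + 2 * z * (1 - u^2)) in
  (1-E)/(1+E) = Cf u * Sf z.
Proof. intros Hu Hz E. unfold E, Cf, Sf. field. repeat split; nra. Qed.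

Lemma C_inj (E A : R) : 0 <= E -> 0 <= A -> (1-E)/(1+E) = (1-A)/(1+A) -> E = A.
Proof. intros HE HA H.
  assert (H2 : (1-E)*(1+A) = (1-A)*(1+E)).
  { apply (Rmult_eq_reg_r (/((1+E)*(1+A)))).
    replace ((1-E)*(1+A)*/((1+E)*(1+A))) with ((1-E)/(1+E)) by (field; lra).
    replace ((1-A)*(1+E)*/((1+E)*(1+A))) with ((1-A)/(1+A)) by (field; lra).
    exact H. apply Rinv_neq_0_compat. nra. }
  nra. Qed.

Lemma div_nonneg (x y : R) : 0 <= x -> 0 < y -> 0 <= x / y.
Proof. intros. unfold Rdiv. apply Rmult_le_pos; auto. left; apply Rinv_0_lt_compat; auto. Qed.

Lemma Q2R_mk (n m : Z) : (0 < m)%Z -> Q2R (n # Z.to_pos m) = IZR n / IZR m.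
Proof. intros H. unfold Q2R. simpl. rewrite Z2Pos.id; auto. Qed.

Lemma fa_eq (u z a : R) : 0 <= a -> a^2 = (u^2+z^2)/(u^2*z^2+1) -> a = f_a u z.
Proof. intros H E. unfold f_a. rewrite <- E. rewrite sqrt_pow2; auto. Qed.

Lemma fb_eq (u z b : R) : 0 <= b -> b^2 = ((1 + u^2) * (1 + z^2) - 2 * z * (1 - u^2)) /
        ((1 + u^2) * (1 + z^2) + 2 * z * (1 - u^2)) -> b = f_b u z.
Proof. intros H E. unfold f_b. rewrite <- E. rewrite sqrt_pow2; auto. Qed.

Lemma lt1 (x y d : R) : 0 < x -> 0 < y -> 0 < d -> x^2 + y^2 = d^2 ->
  0 < (d-x)/y < 1.
Proof. intros. assert (x < d) by nra. assert (d < x + y) by nra.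
  split. apply Rdiv_lt_0_compat; lra.
  apply (Rmult_lt_reg_r y); auto. unfold Rdiv. rewrite Rmult_assoc, Rinv_l; lra. Qed.

Lemma Z2R (x y z : Z) : (x^2 + y^2 = z^2)%Z -> (IZR x)^2 + (IZR y)^2 = (IZR z)^2.
Proof. intros H. rewrite !Z.pow_2_r in H. apply (f_equal IZR) in H.
  rewrite plus_IZR, !mult_IZR in H. nra. Qed.

Lemma forward : perfect_euler_cuboid_exists ->
  exists a b u : Q,
    0 < Q2R u < 1 /\ in_Dab (Q2R a) (Q2R b) /\
    charP (Q2R a) (Q2R b) (Q2R u) = 0.
Proof.
  intros (a0 & b0 & c0 & al & be & ga & d & H1 & H2 & H3 & H4 & H5 & H6 & H7 & E1 & E2 & E3 & E4).
  assert (F1 : (a0^2 + al^2 = d^2)%Z) by lia.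
  assert (F2 : (b0^2 + be^2 = d^2)%Z) by lia.
  assert (F3 : (ga^2 + c0^2 = d^2)%Z) by lia.
  apply Z2R in E1, F1, F2, F3.
  exists ((d - a0) # Z.to_pos al), ((d - b0) # Z.to_pos be), ((d - ga) # Z.to_pos c0).
  rewrite !Q2R_mk by lia. rewrite !minus_IZR.
  set (A := IZR a0) in *. set (B := IZR b0) in *. set (C := IZR c0) in *.
  set (Al := IZR al) in *. set (Be := IZR be) in *. set (G := IZR ga) in *.
  set (D := IZR d) in *.
  assert (pA : 0 < A) by (apply IZR_lt; lia).
  assert (pB : 0 < B) by (apply IZR_lt; lia).
  assert (pC : 0 < C) by (apply IZR_lt; lia).
  assert (pAl : 0 < Al) by (apply IZR_lt; lia).
  assert (pBe : 0 < Be) by (apply IZR_lt; lia).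
  assert (pG : 0 < G) by (apply IZR_lt; lia).
  assert (pD : 0 < D) by (apply IZR_lt; lia).
  destruct (half A Al D) as [Ca _]; try lra.
  destruct (half B Be D) as [Cb _]; try lra.
  destruct (half G C D) as [Cu _]; try lra.
  destruct (half A B G) as [Cz Sz]; try lra.
  set (a := (D - A)/Al) in *. set (b := (D-B)/Be) in *. set (u := (D-G)/C) in *.
  set (z := (G - A)/B) in *.
  assert (hu : 0 < u < 1) by (apply lt1; lra).
  assert (hz : 0 < z < 1) by (apply lt1; lra).
  assert (ha : 0 < a) by (apply Rdiv_lt_0_compat; nra).
  assert (hb : 0 < b) by (apply Rdiv_lt_0_compat; nra).
  split; [exact hu|]. split.
  - exists u, z. split; [exact hu|]. split; [exact hz|]. split.
    + apply fa_eq; [lra|]. symmetry; apply C_inj; [apply div_nonneg; nra|nra|].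
      rewrite Ea_C. fold (Cf a). rewrite Ca, Cu, Cz. field. lra.
    + apply fb_eq; [lra|]. symmetry; apply C_inj; [|nra|].
      apply div_nonneg; nra.
      rewrite Eb_C by auto. fold (Cf b). rewrite Cb, Cu, Sz. field. lra.
  - rewrite charP_C. rewrite Ca, Cb, Cu.
    replace ((A/D)^2 + (B/D)^2 - (G/D)^2) with ((A^2+B^2-G^2)/D^2) by (field; lra).
    rewrite E1. unfold Rdiv. ring.
Qed.

Lemma key_R (pa qa pb qb pu qu : R) : qa <> 0 -> qb <> 0 -> qu <> 0 ->
  ((qa*qa-pa*pa)*(qb*qb+pb*pb)*(qu*qu+pu*pu))*((qa*qa-pa*pa)*(qb*qb+pb*pb)*(qu*qu+pu*pu)) + ((qb*qb-pb*pb)*(qa*qa+pa*pa)*(qu*qu+pu*pu))*((qb*qb-pb*pb)*(qa*qa+pa*pa)*(qu*qu+pu*pu)) - ((qu*qu-pu*pu)*(qa*qa+pa*pa)*(qb*qb+pb*pb))*((qu*qu-pu*pu)*(qa*qa+pa*pa)*(qb*qb+pb*pb)) = (qa*qb*qu)^4 * charP (pa/qa) (pb/qb) (pu/qu).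
Proof. intros. unfold charP. field. auto. Qed.

Lemma sum_sq_pos (q p : Z) : (0 < q)%Z -> (0 < q*q+p*p)%Z.
Proof. nia. Qed.

Lemma backward_int (pa qa pb qb pu qu : Z) : (0 < qa)%Z -> (0 < qb)%Z -> (0 < qu)%Z ->
  pa <> 0%Z -> pb <> 0%Z -> pu <> 0%Z ->
  (qa*qa-pa*pa <> 0)%Z -> (qb*qb-pb*pb <> 0)%Z -> (qu*qu-pu*pu <> 0)%Z ->
  charP (IZR pa/IZR qa) (IZR pb/IZR qb) (IZR pu/IZR qu) = 0 ->
  perfect_euler_cuboid_exists.
Proof.
  intros hqa hqb hqu hpa hpb hpu h1 h2 h3 HP.
  set (Na := (qa*qa+pa*pa)%Z). set (Nb := (qb*qb+pb*pb)%Z). set (Nu := (qu*qu+pu*pu)%Z).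
  set (X1 := ((qa*qa-pa*pa)*Nb*Nu)%Z). set (X2 := ((qb*qb-pb*pb)*Na*Nu)%Z).
  set (X3 := (2*pu*qu*Na*Nb)%Z).
  set (F1 := (2*pa*qa*Nb*Nu)%Z). set (F2 := (2*pb*qb*Na*Nu)%Z).
  set (F3 := ((qu*qu-pu*pu)*Na*Nb)%Z). set (D := (Na*Nb*Nu)%Z).
  assert (pNa : (0 < Na)%Z) by (unfold Na; apply sum_sq_pos; lia).
  assert (pNb : (0 < Nb)%Z) by (unfold Nb; apply sum_sq_pos; lia).
  assert (pNu : (0 < Nu)%Z) by (unfold Nu; apply sum_sq_pos; lia).
  assert (nz : forall x y : Z, x <> 0%Z -> y <> 0%Z -> (x*y <> 0)%Z).
  { intros x y hx hy. apply Z.neq_mul_0; auto. }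
  assert (n1 : X1 <> 0%Z) by (unfold X1; repeat apply nz; lia).
  assert (n2 : X2 <> 0%Z) by (unfold X2; repeat apply nz; lia).
  assert (n3 : X3 <> 0%Z) by (unfold X3; repeat apply nz; lia).
  assert (n4 : F1 <> 0%Z) by (unfold F1; repeat apply nz; lia).
  assert (n5 : F2 <> 0%Z) by (unfold F2; repeat apply nz; lia).
  assert (n6 : F3 <> 0%Z) by (unfold F3; repeat apply nz; lia).
  assert (n7 : D <> 0%Z) by (unfold D; repeat apply nz; lia).
  assert (K : (X1*X1 + X2*X2 - F3*F3 = 0)%Z).
  { apply eq_IZR_R0. rewrite <- (Rmult_0_r ((IZR qa*IZR qb*IZR qu)^4)), <- HP.
    rewrite <- key_R by (apply not_0_IZR; lia). unfold X1, X2, F3, Na, Nb, Nu.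
    repeat first [rewrite minus_IZR | rewrite plus_IZR | rewrite mult_IZR]. ring. }
  assert (G1 : (X1*X1 + F1*F1 = D*D)%Z) by (unfold X1, F1, D, Na; ring).
  assert (G2 : (X2*X2 + F2*F2 = D*D)%Z) by (unfold X2, F2, D, Nb; ring).
  assert (G3 : (X3*X3 + F3*F3 = D*D)%Z) by (unfold X3, F3, D, Nu; ring).
  clearbody Na Nb Nu.
  clear HP.
  clearbody X1 X2 X3 F1 F2 F3 D.
  assert (sq : forall x : Z, (Z.abs x ^ 2 = x * x)%Z) by (intros; rewrite Z.pow_2_r; apply Z.abs_square).
  exists (Z.abs X1), (Z.abs X2), (Z.abs X3), (Z.abs F1), (Z.abs F2), (Z.abs F3), (Z.abs D).
  unfold perfect_euler_cuboid. rewrite !sq.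
  repeat split; try (apply Z.abs_pos; assumption); lia.
Qed.

Lemma Ea_bounds (u z : R) : 0 < u < 1 -> 0 < z < 1 ->
  0 < (u^2+z^2)/(u^2*z^2+1) < 1.
Proof. intros. split. apply Rdiv_lt_0_compat; nra.
  assert (P : 0 < u^2*z^2+1) by nra.
  apply (Rmult_lt_reg_r (u^2*z^2+1)). nra. unfold Rdiv. rewrite Rmult_assoc, Rinv_l by lra.
  assert (0 < (1-u^2)*(1-z^2)) by (apply Rmult_lt_0_compat; nra). nra. Qed.

Lemma Eb_bounds (u z : R) : 0 < u < 1 -> 0 < z < 1 ->
  0 < ((1 + u^2) * (1 + z^2) - 2 * z * (1 - u^2)) /
        ((1 + u^2) * (1 + z^2) + 2 * z * (1 - u^2)) < 1.
Proof. intros. split. apply Rdiv_lt_0_compat; nra.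
  assert (P : 0 < (1 + u^2) * (1 + z^2) + 2 * z * (1 - u^2)) by nra.
  apply (Rmult_lt_reg_r ((1 + u^2) * (1 + z^2) + 2 * z * (1 - u^2))). nra.
  unfold Rdiv. rewrite Rmult_assoc, Rinv_l by lra.
  assert (0 < z*(1-u^2)) by (apply Rmult_lt_0_compat; nra). nra. Qed.

Lemma sqrt_sq_in (E : R) : 0 < E < 1 -> 0 < (sqrt E)^2 < 1.
Proof. intros. rewrite pow2_sqrt by lra. lra. Qed.


Lemma Z_conds (p q : Z) (r : R) : (0 < q)%Z -> r = IZR p / IZR q -> 0 < r^2 < 1 ->
  p <> 0%Z /\ (q*q - p*p <> 0)%Z.
Proof. intros hq hr hb. assert (Hq : 0 < IZR q) by (apply IZR_lt; lia).
  split.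
  - intros ->. subst r. unfold Rdiv in hb. rewrite Rmult_0_l in hb. lra.
  - intros E. assert (E' : IZR p * IZR p = IZR q * IZR q).
    { rewrite <- !mult_IZR. f_equal. lia. }
    assert (r^2 = 1). { subst r. replace ((IZR p/IZR q)^2) with ((IZR p*IZR p)/(IZR q*IZR q)) by (field; lra).
      rewrite E'. field. lra. }
    lra.
Qed.

Lemma backward : (exists a b u : Q,
    0 < Q2R u < 1 /\ in_Dab (Q2R a) (Q2R b) /\
    charP (Q2R a) (Q2R b) (Q2R u) = 0) -> perfect_euler_cuboid_exists.
Proof.
  intros (a & b & u & hu & (u' & z & hu' & hz & Ha & Hb) & HP).
  assert (ra : Q2R a = IZR (Qnum a) / IZR (Z.pos (Qden a))) by reflexivity.
  assert (rb : Q2R b = IZR (Qnum b) / IZR (Z.pos (Qden b))) by reflexivity.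
  assert (ru : Q2R u = IZR (Qnum u) / IZR (Z.pos (Qden u))) by reflexivity.
  assert (ba : 0 < (Q2R a)^2 < 1) by (rewrite Ha; unfold f_a; apply sqrt_sq_in, Ea_bounds; auto).
  assert (bb : 0 < (Q2R b)^2 < 1) by (rewrite Hb; unfold f_b; apply sqrt_sq_in, Eb_bounds; auto).
  assert (bu : 0 < (Q2R u)^2 < 1) by nra.
  destruct (Z_conds _ _ _ (eq_refl _ : (0 < Z.pos (Qden a))%Z) ra ba) as [c1 c2].
  destruct (Z_conds _ _ _ (eq_refl _ : (0 < Z.pos (Qden b))%Z) rb bb) as [c3 c4].
  destruct (Z_conds _ _ _ (eq_refl _ : (0 < Z.pos (Qden u))%Z) ru bu) as [c5 c6].
  rewrite ra, rb, ru in HP.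
  eapply backward_int; [| | | exact c1 | exact c3 | exact c5 | exact c2 | exact c4 | exact c6 | exact HP]; lia.
Qed.

Theorem theorem5p2 :
  perfect_euler_cuboid_exists <->
  exists a b u : Q,
    0 < Q2R u < 1 /\ in_Dab (Q2R a) (Q2R b) /\
    charP (Q2R a) (Q2R b) (Q2R u) = 0.
Proof. split; [exact forward | exact backward]. Qed.
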